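(* Let $P\in\mathbb{C}[z_1,\dots,z_d]$ be a polynomial of total degree $k\ge1$. Then \[ \lim_{s\to\infty}\sqrt[s]{\|P^s\|_a}=\infty . \]
   Context: For multi-indices $\alpha\in\mathbb{N}^d$ write $z^\alpha=z_1^{\alpha_1}\cdots z_d^{\alpha_d}$ and $\alpha!=\alpha_1!\cdots\alpha_d!$. The apolar inner product on $\mathbb{C}[z_1,\dots,z_d]$ is $\langle \sum c_\alpha z^\alpha,\sum d_\alpha z^\alpha\rangle_a=\sum_\alpha\alpha!\,c_\alpha\overline{d_\alpha}$, with norm $\|P\|_a=\sqrt{\langle P,P\rangle_a}$. The total degree is the largest $|\alpha|=\alpha_1+\cdots+\alpha_d$ with nonzero coefficient. *)

(* Defs.v *)
From HB Require Import structures.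
From mathcomp Require Import all_boot all_order all_algebra.
From mathcomp Require Import complex.
From mathcomp Require Import mpoly.

Set Implicit Arguments.
Unset Strict Implicit.
Unset Printing Implicit Defensive.

Import Order.TTheory GRing.Theory Num.Theory.
Local Open Scope ring_scope.

Notation cpoly R d := (@mpoly.mpoly d (complex R)).

Definition mfact (d : nat) (m : 'X_{1..d}) : nat := (\prod_(i < d) (m i)`!)%N.

Definition abs2 (R : nzRingType) (z : complex R) : R := complex.Re z ^+ 2 + complex.Im z ^+ 2.

Definition apolar_norm (R : rcfType) (d : nat) (P : cpoly R d) : R :=
  Num.sqrt (\sum_(m <- msupp P) (mfact m)%:R * abs2 (P@_m)).

(* total degree: largest |alpha| with nonzero coefficient
   (msize P = 1 + total degree, and msize 0 = 0) *)
Definition total_degree (d : nat) (R : nzRingType) (P : {mpoly R[d]}) : nat :=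
  (msize P).-1.

(* Main.v *)
Require Import Defs.
From HB Require Import structures.
From mathcomp Require Import all_boot all_order all_algebra.
From mathcomp Require Import complex.
From mathcomp Require Import mpoly.
From mathcomp Require Import all_classical all_reals all_analysis.
From mathcomp Require Import zify ring lra.
Import Order.TTheory GRing.Theory Num.Theory.
Import numFieldNormedType.Exports.
Local Open Scope classical_set_scope.
Local Open Scope ring_scope.

Lemma fact_sqr_ge (s : nat) : (s ^ s <= s`! * s`!)%N.
Proof.
have E : s`! = (\prod_(i < s) i.+1)%N.
  by rewrite fact_prod big_add1 /= big_mkord.
have E2 : s`! = (\prod_(i < s) (s - i))%N.
  rewrite E (reindex_inj rev_ord_inj) /=; apply: eq_bigr => i _.
  by rewrite /= subnSK.
rewrite {1}E E2 -big_split /=.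
apply: (@leq_trans (\prod_(i < s) s)%N); first by rewrite prod_nat_const card_ord.
apply: leq_prod => i _; have := ltn_ord i; set j := nat_of_ord i.
move=> hj; have [t ->] : exists t, s = (j + t.+1)%N by exists (s - j.+1)%N; lia.
rewrite addKn; nia.
Qed.

Lemma abs2M (R : rcfType) (x y : complex R) : abs2 (x * y) = abs2 x * abs2 y.
Proof. by case: x => a b; case: y => c e; rewrite /abs2 /=; ring. Qed.

Lemma abs2X (R : rcfType) (x : complex R) n : abs2 (x ^+ n) = abs2 x ^+ n.
Proof.
elim: n => [|n IH]; first by rewrite /abs2 /= expr0n /=; ring.
by rewrite !exprS abs2M IH.
Qed.

Lemma abs2_gt0 (R : rcfType) (x : complex R) : x != 0 -> 0 < abs2 x.
Proof.
case: x => a b hx; rewrite /abs2 /=.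
rewrite lt0r addr_ge0 ?sqr_ge0 // andbT paddr_eq0 ?sqr_ge0 // !sqrf_eq0.
by apply: contra hx => /andP[/eqP-> /eqP->].
Qed.

Lemma mfact_ge (d : nat) (m : 'X_{1..d}) s : (0 < mdeg m)%N -> (s`! <= mfact (m *+ s)%MM)%N.
Proof.
move=> hm.
have [i hi] : exists i, (0 < m i)%N.
  case: (pickP (fun i => 0 < m i)%N) => [i hi|h]; first by exists i.
  move: hm; rewrite mdegE big1 // => i _; have := h i; rewrite /=; lia.
rewrite /mfact (bigD1 i) //= mulmnE.
apply: (@leq_trans (m i * s)`!); first by apply: leq_fact; nia.
by apply: leq_pmulr; rewrite prodn_gt0 // => j; rewrite fact_gt0.
Qed.

Lemma apolar_lb (R : rcfType) d (P : cpoly R d) s : P != 0 -> (0 < mdeg (mlead P))%N ->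
  (s`!)%:R * abs2 (mleadc P) ^+ s <= apolar_norm (P ^+ s) ^+ 2.
Proof.
move=> hP hm.
have hPs : P ^+ s != 0 by rewrite expf_neq0.
rewrite /apolar_norm sqr_sqrtr; last first.
  by apply: sumr_ge0 => m _; apply: mulr_ge0; [exact: ler0n | rewrite /abs2 addr_ge0 ?sqr_ge0].
rewrite (bigD1_seq (mlead (P ^+ s))) ?msupp_uniq ?mlead_supp //=.
apply: ler_wpDr.
  by apply: sumr_ge0 => m _; apply: mulr_ge0; [exact: ler0n | rewrite /abs2 addr_ge0 ?sqr_ge0].
rewrite mleadX // mleadcX abs2X; apply: ler_wpM2r.
  by apply: exprn_ge0; rewrite /abs2 addr_ge0 ?sqr_ge0.
by rewrite ler_nat mfact_ge.
Qed.

Theorem theorem5p2 (R : realType) (d k : nat) (P : cpoly R d) :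
  (1 <= k)%N -> total_degree P = k ->
  (fun s : nat => powR (apolar_norm (P ^+ s)) (s%:R^-1)) @ \oo --> +oo.
Proof.
move=> hk hdeg.
have hP : P != 0.
  by apply: contraTneq hk => hP0; rewrite -hdeg /total_degree hP0 msize0.
have hm : (0 < mdeg (mlead P))%N.
  move: (mlead_deg hP); rewrite /total_degree in hdeg; lia.
set c := abs2 (mleadc P).
have hc : 0 < c by apply: abs2_gt0; rewrite mleadc_eq0.
apply/cvgryPge => A.
set M := Num.max A 1.
have M1 : 1 <= M by rewrite le_max lexx orbT.
have AM : A <= M by rewrite le_max lexx.
have M0 : 0 <= M by apply: le_trans M1.
set B := M ^+ 2 / c.
have B0 : 0 <= B by apply: divr_ge0; [exact: sqr_ge0 | exact: ltW].
exists (Num.truncn (B ^+ 2)).+1 => // s /= hs.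
have s0 : (0 < s)%N by lia.
have sB : B ^+ 2 <= s%:R.
  apply/ltW/(lt_le_trans (truncnS_gt _)); rewrite ler_nat; exact: hs.
have f1 : B ^+ s <= (s`!)%:R.
  rewrite -ler_sqr ?nnegrE ?exprn_ge0 ?ler0n //.
  rewrite -exprM mulnC exprM.
  apply: (le_trans (lerXn2r _ _ _ sB)); rewrite ?nnegrE ?sqr_ge0 ?ler0n //.
  by rewrite -natrX expr2 -natrM ler_nat fact_sqr_ge.
have f2 : (M ^+ s) ^+ 2 <= apolar_norm (P ^+ s) ^+ 2.
  have L := @apolar_lb R d P s hP hm. apply: (le_trans _ L).
  have -> : (M ^+ s) ^+ 2 = B ^+ s * c ^+ s.
    by rewrite -exprMn /B divfK ?gt_eqF // -!exprM mulnC.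
  by apply: ler_wpM2r => //; apply: exprn_ge0; apply: ltW.
have f3 : M ^+ s <= apolar_norm (P ^+ s).
  by rewrite -ler_sqr ?nnegrE ?exprn_ge0 // /apolar_norm sqrtr_ge0.
apply: (le_trans AM).
have -> : M = (M ^+ s) `^ s%:R^-1.
  by rewrite -powR_mulrn // -powRrM mulfV ?pnatr_eq0 -?lt0n // powRr1.
apply: ge0_ler_powR => //; rewrite ?nnegrE ?invr_ge0 ?ler0n ?exprn_ge0 //.
by rewrite /apolar_norm sqrtr_ge0.
Qed.
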